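(* Let $\mathcal T$ be a complete binary tree and let $\mathcal A,\mathcal B,\mathcal C\subseteq\mathcal V(\mathcal T)$. Then $\mathrm{desc}(\mathcal A)\subseteq\mathrm{desc}\big((\mathcal A\cup\mathcal B)\setminus\mathrm{desc}(\mathcal C)\big)\cup\mathrm{desc}\big(\mathcal C\setminus\overline{\mathrm{desc}}(\mathcal B)\big)$.
   Context: $\mathcal V(\mathcal T)$ is the vertex set of the complete binary tree (nodes are binary strings, root is the empty string, children of $u$ are $u0,u1$). For a node $u$, $\mathrm{desc}(u)$ is the set of descendants of $u$ including $u$, and $\overline{\mathrm{desc}}(u)$ the set of descendants of $u$ excluding $u$; for a set $\mathcal U$ of nodes, $\mathrm{desc}(\mathcal U)=\bigcup_{u\in\mathcal U}\mathrm{desc}(u)$ and $\overline{\mathrm{desc}}(\mathcal U)=\bigcup_{u\in\mathcal U}\overline{\mathrm{desc}}(u)$. *)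

(* Defs.v *)
From mathcomp Require Import all_boot.
From mathcomp Require Import boolp classical_sets.
Set Implicit Arguments. Unset Strict Implicit. Unset Printing Implicit Defensive.
Local Open Scope classical_set_scope.

(* Vertices of the (infinite) complete binary tree: finite binary strings.
   The root is [::]; the children of u are u ++ [:: false] and u ++ [:: true]. *)
Definition node := seq bool.

Definition desc (u : node) : set node := [set v | prefix u v].

Definition sdesc (u : node) : set node := [set v | prefix u v /\ v <> u].

Definition descS (U : set node) : set node := \bigcup_(u in U) desc u.
Definition sdescS (U : set node) : set node := \bigcup_(u in U) sdesc u.

(* Main.v *)
Require Import Defs.
From mathcomp Require Import all_boot.
From mathcomp Require Import boolp classical_sets.
Local Open Scope classical_set_scope.

Lemma prefix_size_lt (b c : node) : prefix b c -> b <> c -> size b < size c.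
Proof.
move=> /prefixP [s ->] ne; rewrite size_cat -[X in X < _]addn0 ltn_add2l lt0n size_eq0.
by apply/negP => /eqP E; apply: ne; rewrite E cats0.
Qed.

Lemma prefix_size (b c : node) : prefix b c -> size b <= size c.
Proof. by move=> /prefixP [s ->]; rewrite size_cat leq_addr. Qed.

Theorem proposition2p3 (A B C : set node) :
  descS A `<=` descS ((A `|` B) `\` descS C) `|` descS (C `\` sdescS B).
Proof.
move=> v [a Aa /= av].
have [aC|naC] := pselect (descS C a); last first.
  by left; exists a => //; split => //; left.
case: aC => c Cc /= ca.
have cv : prefix c v by exact: (prefix_trans ca av).
move: {2}(size c) (leqnn (size c)) => n.
elim: n c Cc cv {ca} => [|n IH] c Cc cv hs.
  have [cB|ncB] := pselect (sdescS B c); last by right; exists c.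
  case: cB => b Bb [bc nbc].
  by have := @prefix_size_lt b c bc (fun e => nbc (esym e)); rewrite ltnNge (leq_trans hs).
have [cB|ncB] := pselect (sdescS B c); last by right; exists c.
case: cB => b Bb [bc nbc].
have bv : prefix b v by exact: (prefix_trans bc cv).
have [bC|nbC] := pselect (descS C b); last by left; exists b => //; split => //; right.
case: bC => c' Cc' /= c'b.
apply: (IH c' Cc' (prefix_trans c'b bv)).
have := @prefix_size_lt b c bc (fun e => nbc (esym e)); have := @prefix_size c' b c'b.
move=> h1 h2; rewrite -ltnS; apply: leq_trans hs; exact: leq_ltn_trans h1 h2.
Qed.
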